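(* Let $X$ be a real Banach space and let $Y,Z$ be closed subspaces of $X$ with $Z\subseteq Y\subseteq X$. If $Z$ is a semi $M$-ideal in $X$ and $Y/Z$ has property-$(wU)$ in $X/Z$, then $Y$ has property-$(wU)$ in $X$.
   Context: $Y$ has property-$(wU)$ in $X$ if every $y^*\in Y^*$ that attains its norm on the unit sphere $S_Y$ (i.e. $\|y^*\|=y^*(y_0)$ for some $y_0\in S_Y$) has a unique extension $x^*\in X^*$ with $x^*|_Y=y^*$ and $\|x^*\|=\|y^*\|$. A closed subspace $J$ of $X$ is a semi $M$-ideal if $X^*=J^\perp\oplus_{\ell_1}W$ for some closed subset $W\subseteq X^*$, i.e. every $x^*\in X^*$ decomposes uniquely as $x^*=u+w$ with $u\in J^\perp$, $w\in W$, and $\|x^*\|=\|u\|+\|w\|$ (equivalently, $J$ has the $2$-ball property in $X$); here $J^\perp=\{x^*\in X^*:x^*|_J=0\}$. $Y/Z$ is regarded as a subspace of $X/Z$ with the quotient norm. *)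

(* Defs.v *)
From HB Require Import structures.
From mathcomp Require Import all_boot all_order all_algebra.
From mathcomp Require Import all_classical all_reals all_analysis.
Set Implicit Arguments. Unset Strict Implicit. Unset Printing Implicit Defensive.
Import Order.TTheory GRing.Theory Num.Theory.
Import numFieldNormedType.Exports.
Local Open Scope classical_set_scope.
Local Open Scope ring_scope.

Section Defs.
Variables (R : realType) (X : normedModType R).

Definition closed_subspace (S : set X) : Prop :=
  [/\ S 0, (forall x y, S x -> S y -> S (x + y)),
      (forall (a : R) x, S x -> S (a *: x)) & closed S].

Definition linear_on (S : set X) (f : X -> R) : Prop :=
  forall (a : R) x y, S x -> S y -> f (a *: x + y) = a * f x + f y.

Definition bounded_on (S : set X) (f : X -> R) : Prop :=
  exists M : R, forall x, S x -> `|f x| <= M * `|x|.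

(* element of S^* represented by any function X -> R (only its values on S
   matter) *)
Definition functional_on (S : set X) (f : X -> R) : Prop :=
  linear_on S f /\ bounded_on S f.

Definition fnorm (S : set X) (f : X -> R) : R :=
  sup [set `|f x| | x in [set x | S x /\ `|x| <= 1]].

Definition dual (f : X -> R) : Prop := functional_on setT f.

Definition annihilator (J : set X) (f : X -> R) : Prop :=
  dual f /\ forall x, J x -> f x = 0.

Definition dual_closed (W : set (X -> R)) : Prop :=
  (forall w, W w -> dual w) /\
  forall f, dual f ->
    (forall e : R, 0 < e -> exists2 w, W w & fnorm setT (f \- w) < e) -> W f.

Definition property_wU (Y : set X) : Prop :=
  forall g : X -> R, functional_on Y g ->
    (exists y0, [/\ Y y0, `|y0| = 1 & g y0 = fnorm Y g]) ->
    exists f : X -> R,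
      [/\ dual f, (forall y, Y y -> f y = g y), fnorm setT f = fnorm Y g &
        forall f' : X -> R, dual f' -> (forall y, Y y -> f' y = g y) ->
          fnorm setT f' = fnorm Y g -> forall x, f' x = f x].

Definition semi_M_ideal (J : set X) : Prop :=
  closed_subspace J /\
  exists W : set (X -> R), dual_closed W /\
    forall xs : X -> R, dual xs ->
      exists u : X -> R, exists w : X -> R,
        [/\ annihilator J u, W w, (forall x, xs x = u x + w x),
            fnorm setT xs = fnorm setT u + fnorm setT w &
            forall u' w', annihilator J u' -> W w' ->
              (forall x, xs x = u' x + w' x) ->
              (forall x, u' x = u x) /\ (forall x, w' x = w x)].

Definition qnorm (Z : set X) (x : X) : R := inf [set `|x + z| | z in Z].

(* a functional on S/Z (Z <= S), represented by a function X -> R which is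
   linear on S, vanishes on Z and is bounded for the quotient norm *)
Definition qfunctional_on (Z S : set X) (f : X -> R) : Prop :=
  [/\ linear_on S f, (forall z, Z z -> f z = 0) &
      exists M : R, forall x, S x -> `|f x| <= M * qnorm Z x].

Definition qfnorm (Z S : set X) (f : X -> R) : R :=
  sup [set `|f x| | x in [set x | S x /\ qnorm Z x <= 1]].

Definition quotient_property_wU (Z Y : set X) : Prop :=
  forall g : X -> R, qfunctional_on Z Y g ->
    (exists y0, [/\ Y y0, qnorm Z y0 = 1 & g y0 = qfnorm Z Y g]) ->
    exists f : X -> R,
      [/\ qfunctional_on Z setT f, (forall y, Y y -> f y = g y),
          qfnorm Z setT f = qfnorm Z Y g &
        forall f' : X -> R, qfunctional_on Z setT f' ->
          (forall y, Y y -> f' y = g y) ->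
          qfnorm Z setT f' = qfnorm Z Y g -> forall x, f' x = f x].

End Defs.

(* Main.v *)
Require Import Defs.
From HB Require Import structures.
From mathcomp Require Import all_boot all_order all_algebra.
From mathcomp Require Import all_classical all_reals all_analysis.
From mathcomp Require Import ring lra.
Import Order.TTheory GRing.Theory Num.Theory.
Import numFieldNormedType.Exports.
Local Open Scope classical_set_scope.
Local Open Scope ring_scope.
Section Basic.
Set Implicit Arguments.
Variables (R : realType) (X : normedModType R).
Implicit Types (S Z : set X) (f : X -> R).

Lemma lin0 S f : S 0 -> linear_on S f -> f 0 = 0.
Proof.
move=> S0 hl; have := hl 1 0 0 S0 S0; rewrite scaler0 addr0 mul1r => h.
by have := subrr (f 0); rewrite {1}h addrK.
Qed.

Lemma linZ S f a x : S 0 -> S x -> linear_on S f -> f (a *: x) = a * f x.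
Proof.
move=> S0 Sx hl; have := hl a x 0 Sx S0; rewrite addr0 => ->.
by rewrite (lin0 S0 hl) addr0.
Qed.

Lemma linD S f x y : S x -> S y -> linear_on S f -> f (x + y) = f x + f y.
Proof. by move=> Sx Sy hl; have := hl 1 x y Sx Sy; rewrite scale1r mul1r. Qed.

Definition fset S f := [set `|f x| | x in [set x | S x /\ `|x| <= 1]].

Lemma fset_ub S f : bounded_on S f -> has_ubound (fset S f).
Proof.
case=> M hM; exists `|M| => _ [x [Sx x1] <-].
apply: (le_trans (hM x Sx)); apply: (le_trans (ler_norm _)).
rewrite normrM; apply: ler_piMr => //.
by rewrite normr_id.
Qed.

Lemma fset_n0 S f : S 0 -> fset S f !=set0.
Proof. by move=> S0; exists `|f 0|, 0; split => //; rewrite normr0. Qed.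

Lemma fnorm_ge0 S f : S 0 -> functional_on S f -> 0 <= fnorm S f.
Proof.
move=> S0 [hl hb]; apply: le_trans (normr_ge0 (f 0)) _.
apply: (ub_le_sup (fset_ub hb)); exists 0; split => //.
by rewrite normr0.
Qed.

Lemma fnorm_ub S f x : S 0 -> (forall a y, S y -> S (a *: y)) ->
  functional_on S f -> S x -> `|f x| <= fnorm S f * `|x|.
Proof.
move=> S0 SZ [hl hb] Sx.
have [->|x0] := eqVneq x 0; first by rewrite (lin0 S0 hl) !normr0 mulr0.
have nx : 0 < `|x| by rewrite normr_gt0.
have h : `|f (`|x|^-1 *: x)| <= fnorm S f.
  apply: (ub_le_sup (fset_ub hb)); exists (`|x|^-1 *: x) => //; split; first exact: SZ.
  by rewrite normrZ ger0_norm ?invr_ge0 // mulVf // gt_eqF.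
rewrite (linZ _ _ S0 Sx hl) normrM ger0_norm ?invr_ge0 // mulrC in h.
by rewrite -ler_pdivrMr.
Qed.

Lemma fnorm_le S f M : S 0 -> (forall x, S x -> `|x| <= 1 -> `|f x| <= M) ->
  fnorm S f <= M.
Proof.
move=> S0 h; apply: ge_sup; first exact: fset_n0.
by move=> _ [x [Sx x1] <-]; exact: h.
Qed.

Lemma fnorm_elem S f x : functional_on S f -> S x -> `|x| <= 1 -> `|f x| <= fnorm S f.
Proof.
move=> [hl hb] Sx x1; apply: (ub_le_sup (fset_ub hb)); by exists x.
Qed.

Definition qset Z x := [set `|x + z| | z in Z].

Lemma qnorm_le Z x : Z 0 -> qnorm Z x <= `|x|.
Proof.
move=> Z0; have hl : has_lbound (qset Z x) by exists 0 => _ [z _ <-].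
have := @ge_inf _ (qset Z x) hl `|x + 0|.
rewrite addr0 => h; apply: h; by exists 0; rewrite ?addr0.
Qed.

Lemma qnorm_ge0 Z x : Z 0 -> 0 <= qnorm Z x.
Proof.
move=> Z0; apply: lb_le_inf; first by exists `|x + 0|, 0.
by move=> _ [z _ <-].
Qed.

Lemma q_ub Z u x : Z 0 -> (forall a y, Z y -> Z (a *: y)) -> dual u ->
  (forall z, Z z -> u z = 0) -> `|u x| <= fnorm setT u * qnorm Z x.
Proof.
move=> Z0 ZZ du uZ.
have T0 : @setT X 0 by [].
have TZ : forall a (y : X), setT y -> setT (a *: y) by [].
have n0 := fnorm_ge0 T0 du.
have [n00|npos] := eqVneq (fnorm setT u) 0.
  have := @fnorm_ub setT u x T0 TZ du I; rewrite n00 !mul0r.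
  by move=> h; rewrite normr_le0 in h; rewrite (eqP h) normr0.
have np : 0 < fnorm setT u by rewrite lt_def npos n0.
rewrite mulrC -ler_pdivrMr //; apply: lb_le_inf; first by exists `|x + 0|, 0.
move=> _ [z Zz <-]; rewrite ler_pdivrMr // mulrC.
have <- : u (x + z) = u x.
  by rewrite (@linD setT u x z I I du.1) (uZ _ Zz) addr0.
exact: fnorm_ub.
Qed.

End Basic.
Section HahnBanach.
Set Implicit Arguments.
Variables (R : realType) (X : normedModType R).
Variables (S : set X) (g : X -> R) (N : R).
Hypotheses (N0 : 0 <= N) (S0 : S 0)
  (SD : forall x y, S x -> S y -> S (x + y))
  (SZ : forall (a : R) x, S x -> S (a *: x))
  (gl : linear_on S g) (gN : forall x, S x -> g x <= N * `|x|).

Definition good (G : set (X * R)) : Prop :=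
 [/\ (forall x a b, G (x,a) -> G (x,b) -> a = b),
     (forall x a y b, G (x,a) -> G (y,b) -> G (x + y, a + b)),
     (forall t x a, G (x,a) -> G (t *: x, t * a)),
     (forall x a, G (x,a) -> a <= N * `|x|) &
     (forall y, S y -> G (y, g y))].

Definition Pg (G : set (X * R)) : Prop := G = set0 \/ good G.

Lemma chain_ok (F : set (set (X * R))) : F `<=` Pg -> total_on F subset ->
  Pg (\bigcup_(G in F) G).
Proof.
move=> FP Ftot.
have mem : forall G q, F G -> G q -> good G.
  move=> G q FG Gq; case: (FP G FG) => // G0.
  by rewrite G0 in Gq.
have two : forall G1 G2 q1 q2, F G1 -> F G2 -> G1 q1 -> G2 q2 ->
    exists G, [/\ F G, G q1 & G q2].
  move=> G1 G2 q1 q2 F1 F2 h1 h2; case: (Ftot _ _ F1 F2) => s12.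
    by exists G2; split => //; exact: s12.
  by exists G1; split => //; exact: s12.
case: (pselect (exists G, F G /\ good G)) => [[G0 [FG0 gG0]]|none]; last first.
  left; apply/seteqP; split => // q [G FG Gq].
  by apply: none; exists G; split => //; exact: (mem G q).
right; split.
- move=> x a b [G1 F1 h1] [G2 F2 h2].
  have [G [FG k1 k2]] := two _ _ _ _ F1 F2 h1 h2.
  by have [fn _ _ _ _] := mem _ _ FG k1; exact: fn k1 k2.
- move=> x a y b [G1 F1 h1] [G2 F2 h2].
  have [G [FG k1 k2]] := two _ _ _ _ F1 F2 h1 h2.
  have [_ ad _ _ _] := mem _ _ FG k1; exists G => //; exact: ad.
- move=> t x a [G1 F1 h1]; have [_ _ sc _ _] := mem _ _ F1 h1.
  by exists G1 => //; exact: sc.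
- move=> x a [G1 F1 h1]; have [_ _ _ dm _] := mem _ _ F1 h1; exact: dm.
- move=> y Sy; have [_ _ _ _ ex] := gG0; exists G0 => //; exact: ex.
Qed.

Lemma good_graph : good [set q | S q.1 /\ q.2 = g q.1].
Proof.
split.
- by move=> x a b /= [_ ->] [_ ->].
- move=> x a y b /= [Sx ->] [Sy ->]; split; first exact: SD.
  by rewrite /= (linD _ _ Sx Sy gl).
- move=> t x a /= [Sx ->]; split; first exact: SZ.
  by rewrite /= (linZ _ _ S0 Sx gl).
- by move=> x a /= [Sx ->]; exact: gN.
- by move=> y Sy.
Qed.

Lemma extend_step (A : set (X * R)) (x0 : X) : good A ->
  (forall a, ~ A (x0, a)) ->
  exists B, [/\ good B, A `<=` B & ~ (B `<=` A)].
Proof.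
move=> [fn ad sc dm ex] H.
have A00 : A (0, 0).
  by have := sc 0 0 (g 0) (ex 0 S0); rewrite scale0r mul0r.
pose L := [set r | exists x a, A (x,a) /\ r = a - N * `|x - x0|].
have Lub : forall y b, A (y,b) -> ubound L (N * `|y + x0| - b).
  move=> y b Ayb _ [x [a [Axa ->]]].
  have := dm _ _ (ad _ _ _ _ Axa Ayb).
  have : `|x + y| <= `|x - x0| + `|y + x0|.
    have -> : x + y = (x - x0) + (y + x0) by rewrite addrACA addNr addr0.
    exact: ler_normD.
  move=> h1 h2; have h3 := ler_wpM2l N0 h1; rewrite mulrDr in h3; lra.
have hasL : has_ubound L by exists (N * `|0 + x0| - 0); exact: Lub.
have neL : L !=set0 by exists (0 - N * `|0 - x0|), 0, 0.
pose c := sup L.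
have hc1 : forall x a, A (x,a) -> a - N * `|x - x0| <= c.
  by move=> x a Axa; apply: (ub_le_sup hasL); exists x, a.
have hc2 : forall y b, A (y,b) -> c <= N * `|y + x0| - b.
  by move=> y b Ayb; apply: ge_sup => //; exact: Lub.
pose B := [set q | exists x a t, A (x,a) /\ q = (x + t *: x0, a + t * c)].
exists B; split.
- split.
  + move=> z a1 b1 [x [a [t [Axa [ez ea]]]]] [x' [a' [t' [Axa' [ez' eb]]]]].
    rewrite ea eb.
    have [ett|ntt] := eqVneq t t'.
      rewrite -ett in ez' *; have exx : x = x'.
        by apply: (addIr (t *: x0)); rewrite -ez -ez'.
      by rewrite -exx in Axa'; rewrite (fn _ _ _ Axa Axa').
    exfalso.
    have A1 := ad _ _ _ _ Axa' (sc (-1) _ _ Axa).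
    have A2 := sc ((t - t')^-1) _ _ A1.
    have tt0 : t - t' != 0 by rewrite subr_eq0.
    have : (t - t')^-1 *: (x' + (-1) *: x) = x0.
      have -> : x' + (-1) *: x = (t - t') *: x0.
        rewrite scaleN1r scalerBl.
        have e : x' = z - t' *: x0 by rewrite ez' addrK.
        by rewrite e ez addrAC [x + _]addrC addrK.
      by rewrite scalerA mulVf // scale1r.
    by move=> e; rewrite e in A2; exact: (H _ A2).
  + move=> z a1 y b1 [x [a [t [Axa [-> ->]]]]] [x' [a' [t' [Axa' [-> ->]]]]].
    exists (x + x'), (a + a'), (t + t'); split; first exact: ad.
    congr pair; first by rewrite scalerDl addrACA.
    by rewrite mulrDl addrACA.
  + move=> s z a1 [x [a [t [Axa [-> ->]]]]].
    exists (s *: x), (s * a), (s * t); split; first exact: sc.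
    congr pair; first by rewrite scalerDr scalerA.
    by rewrite mulrDr mulrA.
  + move=> z a1 [x [a [t [Axa [-> ->]]]]].
    have [tneg|tpos'|t0] := ltgtP t 0; last first.
    * by rewrite t0 scale0r addr0 mul0r addr0; exact: dm.
    * have Ht := hc2 _ _ (sc (t^-1) _ _ Axa).
      have E : `|x + t *: x0| = t * `|t^-1 *: x + x0|.
        rewrite -[X in X * _]ger0_norm ?ltW // -normrZ scalerDr scalerA.
        by rewrite mulfV ?gt_eqF // scale1r.
      rewrite E; set n := `|_ + x0| in E Ht *.
      have := ler_wpM2l (ltW tpos') Ht.
      rewrite mulrBr (mulVKf (negbT (gt_eqF tpos'))) => h.
      have -> : N * (t * n) = t * (N * n) by rewrite mulrCA.
      lra.
    * have sp : 0 < - t by rewrite oppr_gt0.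
      have Ht := hc1 _ _ (sc ((- t)^-1) _ _ Axa).
      have E : `|x + t *: x0| = (- t) * `|(- t)^-1 *: x - x0|.
        rewrite -[X in X * _]ger0_norm ?ltW // -normrZ scalerBr scalerA.
        by rewrite mulfV ?gt_eqF // scale1r scaleNr opprK.
      rewrite E; set n := `|_ - x0| in E Ht *.
      have := ler_wpM2l (ltW sp) Ht.
      rewrite mulrBr (mulVKf (negbT (gt_eqF sp))) => h.
      have -> : N * (- t * n) = - t * (N * n) by rewrite mulrCA.
      lra.
  + move=> y Sy; exists y, (g y), 0; split; first exact: ex.
    by rewrite scale0r mul0r !addr0.
- move=> [x a] Axa; exists x, a, 0; split => //.
  by rewrite scale0r mul0r !addr0.
- move=> sub; apply: (H c); apply: sub; exists 0, 0, 1; split => //.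
  by rewrite scale1r mul1r !add0r.
Qed.

Lemma hahn_banach : exists f : X -> R,
  [/\ linear_on setT f, (forall x, S x -> f x = g x) &
      forall x, f x <= N * `|x|].
Proof.
have [A [PA Amax]] := Zorn_bigcup chain_ok.
have gA : good A.
  case: PA => // A0; exfalso.
  apply: (Amax _ _ (or_intror good_graph)); rewrite A0; split => // sub.
  by have := sub (0, g 0) (conj S0 erefl).
have full : forall x, exists a, A (x, a).
  move=> x0; apply: contrapT => nx.
  have H : forall a, ~ A (x0, a) by move=> a Aa; apply: nx; exists a.
  have [B [gB AB nBA]] := @extend_step A x0 gA H.
  exact: (Amax B (conj AB nBA) (or_intror gB)).
have [f hf] := choice full.
have [fn ad sc dm ex] := gA.
exists f; split.
- move=> a x y _ _; apply: (fn _ _ _ (hf _)).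
  exact: ad (sc _ _ _ (hf x)) (hf y).
- by move=> x Sx; apply: (fn _ _ _ (hf x)); exact: ex.
- by move=> x; exact: dm (hf x).
Qed.

End HahnBanach.
Section More.
Set Implicit Arguments.
Variables (R : realType) (X : normedModType R).
Implicit Types (S Z : set X) (f u v : X -> R).

Lemma dual0 : dual (fun _ : X => (0 : R)).
Proof.
split; first by move=> a x y _ _; rewrite mulr0 addr0.
by exists 0 => x _; rewrite normr0 mul0r.
Qed.

Lemma dualB u v : dual u -> dual v -> dual (u \- v).
Proof.
move=> [ul [Mu hu]] [vl [Mv hv]]; split.
  move=> a x y _ _ /=; rewrite (ul a x y I I) (vl a x y I I); ring.
exists (Mu + Mv) => x _ /=; apply: le_trans (ler_normB _ _) _.
by rewrite mulrDl; apply: lerD; [exact: hu | exact: hv].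
Qed.

Lemma qfunc Z S v : Z 0 -> (forall a y, Z y -> Z (a *: y)) -> dual v ->
  (forall z, Z z -> v z = 0) -> qfunctional_on Z S v.
Proof.
move=> Z0 ZZ dv vZ; split => //.
  by move=> a x y _ _; exact: dv.1.
by exists (fnorm setT v) => x _; exact: q_ub.
Qed.

Lemma qfnormE Z S v y0 : Z 0 -> (forall a y, Z y -> Z (a *: y)) -> dual v ->
  (forall z, Z z -> v z = 0) -> S y0 -> qnorm Z y0 <= 1 ->
  `|v y0| = fnorm setT v -> qfnorm Z S v = fnorm setT v.
Proof.
move=> Z0 ZZ dv vZ Sy0 q1 vy0.
have T0 : @setT X 0 by [].
have n0 := fnorm_ge0 T0 dv.
have ub : forall x, qnorm Z x <= 1 -> `|v x| <= fnorm setT v.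
  move=> x qx; apply: le_trans (q_ub Z x Z0 ZZ dv vZ) _.
  by rewrite -[X in _ <= X]mulr1; apply: ler_wpM2l.
apply/eqP; rewrite eq_le; apply/andP; split.
  apply: ge_sup; first by exists `|v y0|, y0.
  by move=> _ [x [_ qx] <-]; exact: ub.
rewrite -vy0; apply: ub_le_sup; last by exists y0.
by exists (fnorm setT v) => _ [x [_ qx] <-]; exact: ub.
Qed.

End More.
Theorem theorem2p2 (R : realType) (X : completeNormedModType R)
  (Y Z : set X) :
  closed_subspace Y -> closed_subspace Z -> Z `<=` Y ->
  semi_M_ideal Z -> quotient_property_wU Z Y ->
  property_wU Y.
Proof.
move=> [Y0 YD YZ _] [Z0 ZD ZZ _] ZY [_ [W [[Wdual _] dec]]] qwU g Hg
  [y0 [Yy0 ny0 gy0]].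
have T0 : @setT X 0 by [].
have TZ : forall (a : R) (y : X), setT y -> setT (a *: y) by [].
set N := fnorm Y g.
have N0 : 0 <= N := fnorm_ge0 Y0 Hg.
have gN : forall x, Y x -> g x <= N * `|x|.
  by move=> x Yx; apply: le_trans (ler_norm _) (fnorm_ub _ Y0 YZ Hg Yx).
have [f [fl fg fN]] := hahn_banach N N0 Y0 YD YZ Hg.1 gN.
have fN' : forall x, `|f x| <= N * `|x|.
  move=> x; rewrite ler_norml fN andbT.
  have := fN (- x); rewrite normrN -scaleN1r (linZ _ _ T0 I fl) mulN1r.
  by rewrite lerNl.
have fd : dual f by split => //; exists N => x _; exact: fN'.
have fnf : fnorm setT f = N.
  apply/eqP; rewrite eq_le; apply/andP; split.
    apply: fnorm_le => // x _ x1; apply: le_trans (fN' x) _.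
    by rewrite -[X in _ <= X]mulr1; apply: ler_wpM2l.
  apply: fnorm_le Y0 _ => x Yx x1; rewrite -fg //.
  exact: fnorm_elem fd I x1.
exists f; split => // f' f'd f'g f'N x.
have [u [w [uA Ww fuw fnuw _]]] := dec f fd.
have [u' [w' [uA' Ww' fuw' fnuw' _]]] := dec f' f'd.
have wd := Wdual w Ww.
have w'd := Wdual w' Ww'.
have ww : w' = w.
  have [u0 [w0 [_ _ _ _ uniq]]] := dec w wd.
  have [_ e1] := uniq (fun _ => 0) w (conj (@dual0 R X) (fun _ _ => erefl)) Ww
    (fun x => esym (add0r _)).
  have ann : annihilator Z (w \- w').
    split; first exact: dualB.
    move=> z Zz /=; have Yz := ZY z Zz; have := fuw z; have := fuw' z.
    rewrite (uA.2 z Zz) (uA'.2 z Zz) !add0r fg // f'g // => h1 h2.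
    by rewrite -h2 -h1 subrr.
  have [_ e2] := uniq (w \- w') w' ann Ww' (fun y => esym (subrK _ _)).
  by apply: funext => y; rewrite e2 e1.
rewrite ww in fuw' fnuw'.
have uu : forall y, Y y -> u' y = u y.
  move=> y Yy; apply: (addIr (w y)); rewrite -fuw -fuw' fg // f'g //.
have ud := uA.1.
have u'd := uA'.1.
have nu0 := fnorm_ge0 T0 ud.
have nw0 := fnorm_ge0 T0 wd.
have nu'0 := fnorm_ge0 T0 u'd.
rewrite fnf in fnuw; rewrite f'N -/N in fnuw'.
have nuu : fnorm setT u' = fnorm setT u by lra.
have qb : u y0 <= fnorm setT u * qnorm Z y0.
  exact: le_trans (ler_norm _) (q_ub Z y0 Z0 ZZ ud uA.2).
have q1 : qnorm Z y0 <= 1 by rewrite -ny0; exact: qnorm_le.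
have q0 : 0 <= qnorm Z y0 by exact: qnorm_ge0.
have wb : w y0 <= fnorm setT w.
  have := fnorm_ub y0 T0 TZ wd I; rewrite ny0 mulr1.
  exact: le_trans (ler_norm _).
have gf : g y0 = u y0 + w y0 by rewrite -fg // fuw.
have qb2 : fnorm setT u * qnorm Z y0 <= fnorm setT u.
  by rewrite -[X in _ <= X]mulr1; apply: ler_wpM2l.
have uy0 : u y0 = fnorm setT u by rewrite -/N in gy0; lra.
have [nuz|nupos] := eqVneq (fnorm setT u) 0.
  have u0 : forall (v : X -> R) x, dual v -> fnorm setT v = 0 -> v x = 0.
    move=> v z dv nv; have := fnorm_ub z T0 TZ dv I; rewrite nv mul0r.
    by rewrite normr_le0 => /eqP.
  rewrite fuw fuw' (u0 u x ud nuz) (u0 u' x u'd) //; by rewrite nuu.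
have nup : 0 < fnorm setT u by rewrite lt_def nupos nu0.
have qe : qnorm Z y0 = 1.
  apply/eqP; rewrite eq_le q1 /=.
  have : fnorm setT u * 1 <= fnorm setT u * qnorm Z y0 by rewrite mulr1 -{1}uy0.
  by rewrite ler_pM2l.
have au : `|u y0| = fnorm setT u by rewrite uy0 ger0_norm.
have au' : `|u' y0| = fnorm setT u' by rewrite uu // nuu.
have qY : qfnorm Z Y u = fnorm setT u := qfnormE Z Y y0 Z0 ZZ ud uA.2 Yy0 q1 au.
have qT : qfnorm Z setT u = fnorm setT u := qfnormE Z setT y0 Z0 ZZ ud uA.2 I q1 au.
have qT' : qfnorm Z setT u' = fnorm setT u' :=
  qfnormE Z setT y0 Z0 ZZ u'd uA'.2 I q1 au'.
have [f0 [_ _ _ uniq0]] := qwU u (qfunc Z Y Z0 ZZ ud uA.2)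
  (ex_intro _ y0 (And3 Yy0 qe (etrans uy0 (esym qY)))).
have h1 := uniq0 u (qfunc Z setT Z0 ZZ ud uA.2) (fun _ _ => erefl) (etrans qT (esym qY)) x.
have h2 := uniq0 u' (qfunc Z setT Z0 ZZ u'd uA'.2) uu
  (etrans qT' (etrans nuu (esym qY))) x.
by rewrite fuw fuw' h1 h2.
Qed.
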